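(* Let $T$ be a strongly dependent complete theory. Let $I=(a_i:i\in[0,1])$ be an indiscernible segment, and let $\phi(x,y)$ be a formula with parameters from $\bar M$ such that $\mu_I(\phi(x,b))=0$ for all $b\in\bar M$. Then there is $k<\omega$ such that $\{\phi(a_i,y):i\in[0,1]\}$ is $k$-inconsistent (every subset of size $k$ is inconsistent).
   Context: Work in a monster model $\bar M$ of $T$. $T$ is strongly dependent if there do NOT exist $L$-formulas $\phi^\alpha(x,y^\alpha)$ ($\alpha<\omega$) and tuples $b^\alpha_i$ ($\alpha,i<\omega$) such that for every $\eta\in\omega^\omega$ the set $\{\phi^\alpha(x,b^\alpha_{\eta(\alpha)}):\alpha<\omega\}\cup\{\neg\phi^\alpha(x,b^\alpha_i):\alpha,i<\omega,\ i\neq\eta(\alpha)\}$ is consistent (this implies NIP). An indiscernible segment is a family $I=(a_i:i\in[0,1])$ indiscernible with respect to the usual order on $[0,1]$. Its global average measure $\mu_I$ is the Keisler measure over $\bar M$ assigning to a formula $\psi(x)$ over $\bar M$ the Lebesgue measure of $\{i\in[0,1]:\models\psi(a_i)\}$. *)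

(* Defs.v *)
From HB Require Import structures.
From mathcomp Require Import all_boot all_order all_algebra.
From mathcomp Require Import all_classical all_reals all_analysis.
From Stdlib Require List.
Set Implicit Arguments. Unset Strict Implicit. Unset Printing Implicit Defensive.
Import Order.TTheory GRing.Theory Num.Theory.
Local Open Scope classical_set_scope.
Local Open Scope ring_scope.

Record signature := Signature {
  fsym : Type; farity : fsym -> nat;
  rsym : Type; rarity : rsym -> nat }.

Inductive term (L : signature) : Type :=
| tvar : nat -> term L
| tapp (f : fsym L) : ('I_(farity f) -> term L) -> term L.

Inductive formula (L : signature) : Type :=
| fFalse : formula L
| fEq : term L -> term L -> formula L
| fRel (r : rsym L) : ('I_(rarity r) -> term L) -> formula L
| fNot : formula L -> formula L
| fAnd : formula L -> formula L -> formula L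
| fEx : nat -> formula L -> formula L.

(* An L-structure (nonempty: dflt is some element). *)
Record structure (L : signature) := Structure {
  carrier :> Type;
  dflt : carrier;
  interp_f : forall f : fsym L, ('I_(farity f) -> carrier) -> carrier;
  interp_r : forall r : rsym L, ('I_(rarity r) -> carrier) -> Prop }.

Section Semantics.
Variables (L : signature) (M : structure L).

Fixpoint teval (e : nat -> M) (t : term L) : M :=
  match t with
  | tvar v => e v
  | tapp f ts => @interp_f _ M f (fun i => teval e (ts i))
  end.

Definition upd (e : nat -> M) (v : nat) (m : M) : nat -> M :=
  fun w => if w == v then m else e w.

Fixpoint holds (e : nat -> M) (phi : formula L) : Prop :=
  match phi with
  | fFalse => False
  | fEq t1 t2 => teval e t1 = teval e t2
  | fRel r ts => @interp_r _ M r (fun i => teval e (ts i))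
  | fNot psi => ~ holds e psi
  | fAnd psi chi => holds e psi /\ holds e chi
  | fEx v psi => exists m : M, holds (upd e v m) psi
  end.

Fixpoint term_vars_in (P : pred nat) (t : term L) : Prop :=
  match t with
  | tvar v => P v
  | tapp f ts => forall i, term_vars_in P (ts i)
  end.

Fixpoint fv_in (P : pred nat) (phi : formula L) : Prop :=
  match phi with
  | fFalse => True
  | fEq t1 t2 => term_vars_in P t1 /\ term_vars_in P t2
  | fRel r ts => forall i, term_vars_in P (ts i)
  | fNot psi => fv_in P psi
  | fAnd psi chi => fv_in P psi /\ fv_in P chi
  | fEx v psi => fv_in (fun w => (w == v) || P w) psi
  end.

(* Assignment: the n-tuple a occupies variables 0..n-1, the remaining
   variables n, n+1, ... are assigned c 0, c 1, ... *)
Definition tup_env (n : nat) (a : 'I_n -> M) (c : nat -> M) : nat -> M :=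
  fun v => if (insub v : option 'I_n) is Some i then a i else c (v - n)%N.

(* A set of conditions on an n-tuple is consistent (with the elementary
   diagram of M): every finite subset of it is realized in M. *)
Definition consistent (n : nat) (J : Type) (P : J -> ('I_n -> M) -> Prop) :=
  forall F : seq J, exists a : 'I_n -> M, forall j, List.In j F -> P j a.

(** Strong dependence of T = Th(M) (consistency in the monster model is
    finite satisfiability in M, by compactness). *)
Definition strongly_dependent : Prop :=
  ~ exists (n : nat) (m : nat -> nat) (phi : nat -> formula L)
           (b : forall alpha : nat, nat -> 'I_(m alpha) -> M),
      (forall alpha, fv_in (fun v => v < n + m alpha)%N (phi alpha)) /\
      forall eta : nat -> nat,
        consistent (fun (j : nat * nat) (x : 'I_n -> M) =>
          let: (alpha, i) := j in
          let h := holds (tup_env x (tup_env (b alpha i) (fun _ => dflt M)))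
                         (phi alpha) in
          if i == eta alpha then h else ~ h).

(** Saturation: a partial type in n variables over a parameter set A
    is a set of pairs (psi, c) where psi has its free variables among
    x_0..x_{n-1} (variables 0..n-1) and parameters c 0 .. c (k-1) from A. *)
Definition type_over (A : set M) (n : nat)
  (Sigma : set (formula L * (nat -> M))) : Prop :=
  forall p, Sigma p -> exists k : nat,
    fv_in (fun v => v < n + k)%N p.1 /\ forall v, (v < k)%N -> A (p.2 v).

Definition fin_sat_type (n : nat) (Sigma : set (formula L * (nat -> M))) :=
  forall F : seq (formula L * (nat -> M)), (forall p, List.In p F -> Sigma p) ->
    exists a : 'I_n -> M, forall p, List.In p F -> holds (tup_env a p.2) p.1.

Definition realized (n : nat) (Sigma : set (formula L * (nat -> M))) :=
  exists a : 'I_n -> M, forall p, Sigma p -> holds (tup_env a p.2) p.1.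

End Semantics.

(** Monster-model hypothesis: M is (2^aleph_0)^+-saturated, i.e. every
    finitely satisfiable type over a parameter set of size at most the
    continuum (= |R| for a realType R) is realized in M. *)
Definition monster (R : realType) (L : signature) (M : structure L) : Prop :=
  forall (A : set M), (A #<= [set: R])%card ->
  forall (n : nat) (Sigma : set (formula L * (nat -> M))),
    type_over A n Sigma -> fin_sat_type n Sigma -> realized n Sigma.

Section Indiscernible.
Variables (R : realType) (L : signature) (M : structure L).

Definition in01 (i : R) : bool := (0 <= i) && (i <= 1).

(* Assignment sending variables q*n .. q*n+n-1 to the tuple a (nth s q)
   for q < size s. *)
Definition seq_env (n : nat) (a : R -> 'I_n -> M) (s : seq R) : nat -> M :=
  fun v => if (v < size s * n)%N then
             (if (insub (v %% n)%N : option 'I_n) is Some r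
              then a (nth 0 s (v %/ n)%N) r else dflt M)
           else dflt M.

Definition indiscernible_segment (n : nat) (a : R -> 'I_n -> M) : Prop :=
  forall (psi : formula L) (s t : seq R),
    size s = size t ->
    fv_in (fun v => v < size s * n)%N psi ->
    sorted <%R s -> sorted <%R t -> all in01 s -> all in01 t ->
    (holds (seq_env a s) psi <-> holds (seq_env a t) psi).

(* mu_I(phi(x,b)) for phi(x,y) with x = variables 0..n-1,
   y = variables n..n+m-1, and parameters c for the remaining variables. *)
Definition avg_measure (n m : nat) (a : R -> 'I_n -> M) (phi : formula L)
  (c : nat -> M) (b : 'I_m -> M) : \bar R :=
  (@lebesgue_measure R) [set i : R | in01 i /\ holds (tup_env (a i) (tup_env b c)) phi].

End Indiscernible.

(* Main.v *)
Require Import Defs.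
From HB Require Import structures.
From mathcomp Require Import all_boot all_order all_algebra.
From mathcomp Require Import all_classical all_reals all_analysis.
Import Order.TTheory GRing.Theory Num.Theory.
Local Open Scope classical_set_scope.
Local Open Scope ring_scope.
Set Implicit Arguments. Unset Strict Implicit.

From mathcomp Require Import zify.
Lemma tvars_mono (L : signature) (t : term L) (P Q : pred nat) :
  (forall v, P v -> Q v) -> term_vars_in P t -> term_vars_in Q t.
Proof. move=> PQ; elim: t => [v|f ts IH] /=; [exact: PQ| by move=> H i; apply: IH]. Qed.

Lemma fv_mono (L : signature) (phi : formula L) (P Q : pred nat) :
  (forall v, P v -> Q v) -> fv_in P phi -> fv_in Q phi.
Proof.
elim: phi P Q => [|t1 t2|r ts|psi IH|psi IH chi IH'|v psi IH] P Q PQ /=.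
- by [].
- by case=> ??; split; apply: tvars_mono PQ _.
- by move=> H i; apply: tvars_mono PQ _.
- exact: IH.
- by case=> ??; split; [apply: IH PQ _|apply: IH' PQ _].
- move=> H; apply: IH H => w /orP[->//|/PQ ->]; by rewrite orbT.
Qed.

Lemma tvars_bound (L : signature) (t : term L) : exists K, term_vars_in (fun v => v < K)%N t.
Proof.
elim: t => [v|f ts IH] /=; first by exists v.+1.
have [g Hg] := fin_all_exists IH.
exists (\max_i g i)%N => i; apply: tvars_mono (Hg i) => v /leq_trans; apply.
exact: (leq_bigmax_cond (F:=g) i isT).
Qed.

Lemma fv_bound (L : signature) (phi : formula L) : exists K, fv_in (fun v => v < K)%N phi.
Proof.
elim: phi => [|t1 t2|r ts|psi IH|psi [K1 H1] chi [K2 H2]|v psi [K H]] /=.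
- by exists 0%N.
- have [K1 H1] := tvars_bound t1; have [K2 H2] := tvars_bound t2.
  exists (maxn K1 K2); split; [apply: tvars_mono H1|apply: tvars_mono H2] => w /leq_trans; apply;
    by rewrite ?leq_maxl ?leq_maxr.
- have [g Hg] := fin_all_exists (fun i => tvars_bound (ts i)).
  exists (\max_i g i)%N => i; apply: tvars_mono (Hg i) => w /leq_trans; apply.
  exact: (leq_bigmax_cond (F:=g) i isT).
- exact: IH.
- exists (maxn K1 K2); split; [apply: fv_mono H1|apply: fv_mono H2] => w /leq_trans; apply;
    by rewrite ?leq_maxl ?leq_maxr.
- exists K; apply: fv_mono H => w ->; by rewrite orbT.
Qed.

Lemma teval_agree (L : signature) (M : structure L) (t : term L) (P : pred nat) (e1 e2 : nat -> M) :
  term_vars_in P t -> (forall v, P v -> e1 v = e2 v) -> teval e1 t = teval e2 t.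
Proof.
move=> + E; elim: t => [v|f ts IH] /=; first exact: E.
by move=> H; congr interp_f; apply: boolp.funext => i; apply: IH.
Qed.

Lemma holds_agree (L : signature) (M : structure L) (phi : formula L) (P : pred nat) (e1 e2 : nat -> M) :
  fv_in P phi -> (forall v, P v -> e1 v = e2 v) -> (holds e1 phi <-> holds e2 phi).
Proof.
elim: phi P e1 e2 => [|t1 t2|r ts|psi IH|psi IH chi IH'|v psi IH] P e1 e2 /= H E.
- by [].
- by case: H => H1 H2; rewrite (teval_agree H1 E) (teval_agree H2 E).
- have -> : (fun i => teval e1 (ts i)) = (fun i => teval e2 (ts i)) by apply: boolp.funext => i; apply: teval_agree (H i) E.
  by [].
- by rewrite (IH P e1 e2 H E).
- by case: H => H1 H2; rewrite (IH P e1 e2 H1 E) (IH' P e1 e2 H2 E).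
- have E' x : forall w, (w == v) || P w -> upd e1 v x w = upd e2 v x w.
    move=> w /orP[/eqP->|Pw]; rewrite /upd ?eqxx //; case: eqP => // _; exact: E.
  by split=> -[x Hx]; exists x; [rewrite -(IH _ _ _ H (E' x))|rewrite (IH _ _ _ H (E' x))].
Qed.

Fixpoint ren_t (L : signature) (s : nat -> nat) (t : term L) : term L :=
  match t with
  | tvar v => tvar L (s v)
  | tapp f ts => tapp (fun i => ren_t s (ts i))
  end.

Fixpoint ren (L : signature) (s : nat -> nat) (phi : formula L) : formula L :=
  match phi with
  | fFalse => fFalse L
  | fEq t1 t2 => fEq (ren_t s t1) (ren_t s t2)
  | fRel r ts => fRel (fun i => ren_t s (ts i))
  | fNot psi => fNot (ren s psi)
  | fAnd psi chi => fAnd (ren s psi) (ren s chi)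
  | fEx v psi => fEx (s v) (ren s psi)
  end.

Lemma teval_ren (L : signature) (M : structure L) s (e : nat -> M) (t : term L) :
  teval e (ren_t s t) = teval (fun v => e (s v)) t.
Proof.
elim: t => [v|f ts IH] //=; congr interp_f; apply: boolp.funext => i; exact: IH.
Qed.

Lemma holds_ren (L : signature) (M : structure L) s (phi : formula L) (e : nat -> M) :
  injective s -> (holds e (ren s phi) <-> holds (fun v => e (s v)) phi).
Proof.
move=> si; elim: phi e => [|t1 t2|r ts|psi IH|psi IH chi IH'|v psi IH] e /=.
- by [].
- by rewrite !teval_ren.
- by have -> : (fun i => teval e (ren_t s (ts i))) = (fun i => teval (fun v => e (s v)) (ts i))
    by apply: boolp.funext => i; rewrite teval_ren.
- by rewrite IH.
- by rewrite IH IH'.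
- have E x : (fun w => upd e (s v) x (s w)) = upd (fun w => e (s w)) v x.
    by apply: boolp.funext => w; rewrite /upd (inj_eq si).
  by split=> -[x Hx]; exists x; move: Hx; rewrite IH E.
Qed.

Lemma tvars_ren (L : signature) s (t : term L) (P Q : pred nat) :
  (forall v, P v -> Q (s v)) -> term_vars_in P t -> term_vars_in Q (ren_t s t).
Proof. move=> PQ; elim: t => [v|f ts IH] /=; [exact: PQ| by move=> H i; apply: IH]. Qed.

Lemma fv_ren (L : signature) s (phi : formula L) (P Q : pred nat) :
  (forall v, P v -> Q (s v)) -> fv_in P phi -> fv_in Q (ren s phi).
Proof.
elim: phi P Q => [|t1 t2|r ts|psi IH|psi IH chi IH'|v psi IH] P Q PQ /=.
- by [].
- by case=> ??; split; apply: tvars_ren PQ _.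
- by move=> H i; apply: tvars_ren PQ _.
- exact: IH.
- by case=> ??; split; [apply: IH PQ _|apply: IH' PQ _].
- move=> H; apply: IH H => w /orP[/eqP->|/PQ ->]; by rewrite ?eqxx ?orbT.
Qed.

Fixpoint exs (L : signature) (vs : seq nat) (psi : formula L) : formula L :=
  match vs with [::] => psi | v :: vs => fEx v (exs vs psi) end.

Definition ovr (M : Type) (e : nat -> M) (vs : seq nat) (f : nat -> M) :=
  fun w => if w \in vs then f w else e w.

Lemma exs_intro (L : signature) (M : structure L) vs psi (e f : nat -> M) :
  holds (ovr e vs f) psi -> holds e (exs vs psi).
Proof.
elim: vs e => [|v vs IH] e /=.
  by have -> : ovr e [::] f = e by apply: boolp.funext => w; rewrite /ovr in_nil.
move=> H; exists (f v); apply: IH.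
have -> : ovr (upd e v (f v)) vs f = ovr e (v :: vs) f; last by [].
apply: boolp.funext => w; rewrite /ovr /upd in_cons.
by case: (w \in vs); rewrite ?orbT // orbF; case: eqP => // ->.
Qed.

Lemma exs_elim (L : signature) (M : structure L) vs psi (e : nat -> M) :
  holds e (exs vs psi) -> exists f, holds (ovr e vs f) psi.
Proof.
elim: vs e => [|v vs IH] e /=.
  move=> H; exists e; by have -> : ovr e [::] e = e by apply: boolp.funext => w; rewrite /ovr in_nil.
case=> x /IH [f Hf]; exists (fun w => if w \in vs then f w else x).
have <- : ovr (upd e v x) vs f = ovr e (v :: vs) (fun w => if w \in vs then f w else x); last by [].
apply: boolp.funext => w; rewrite /ovr /upd in_cons.
by case: (w \in vs); rewrite ?orbT // orbF; case: eqP.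
Qed.

Lemma fv_exs (L : signature) vs (psi : formula L) (P : pred nat) :
  fv_in (fun w => (w \in vs) || P w) psi -> fv_in P (exs vs psi).
Proof.
elim: vs P => [|v vs IH] P /=.
  by apply: fv_mono => w /= .
move=> H; apply: IH; apply: fv_mono H => w; rewrite in_cons.
by case: (w == v); case: (w \in vs).
Qed.

Fixpoint conjN (L : signature) (N : nat) (g : nat -> formula L) : formula L :=
  match N with 0 => fNot (fFalse L) | N'.+1 => fAnd (conjN N' g) (g N') end.

Lemma holds_conjN (L : signature) (M : structure L) N g (e : nat -> M) :
  holds e (conjN N g) <-> forall j, (j < N)%N -> holds e (g j).
Proof.
elim: N => [|N IH] /=; first by split=> // _ j.
split.
  by case=> /IH H1 H2 j; rewrite ltnS leq_eqVlt => /orP[/eqP->//|/H1].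
by move=> H; split; [apply/IH => j jN; apply: H; exact: ltnW| exact: H].
Qed.

Lemma fv_conjN (L : signature) N (g : nat -> formula L) P :
  (forall j, (j < N)%N -> fv_in P (g j)) -> fv_in P (conjN N g).
Proof.
elim: N => [|N IH] H /=; first by [].
split; [apply: IH => j jN; apply: H; exact: ltnW| exact: H].
Qed.

Definition lit (L : signature) (b : bool) (psi : formula L) := if b then psi else fNot psi.

Lemma tup_env_lt (L : signature) (M : structure L) n (x : 'I_n -> M) c v (h : (v < n)%N) :
  tup_env x c v = x (Ordinal h).
Proof. by rewrite /tup_env (insubT (fun v => v < n)%N h). Qed.

Lemma tup_env_ge (L : signature) (M : structure L) n (x : 'I_n -> M) c v :
  (n <= v)%N -> tup_env x c v = c (v - n)%N.
Proof. by move=> h; rewrite /tup_env insubF // ltnNge h. Qed.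

Lemma seq_env_at (R : realType) (L : signature) (M : structure L) n (a : R -> 'I_n -> M) s q r
  (hr : (r < n)%N) : (q < size s)%N -> seq_env a s (q * n + r) = a (nth 0 s q) (Ordinal hr).
Proof.
move=> hq; rewrite /seq_env.
have -> : (q * n + r < size s * n)%N.
  apply: (leq_trans (n := q.+1 * n)); first by rewrite mulSn; lia.
  by rewrite leq_mul2r hq orbT.
have n0 : (0 < n)%N by apply: leq_ltn_trans hr.
rewrite modnMDl (modn_small hr) divnMDl // (divn_small hr) addn0.
by rewrite (insubT (fun v => v < n)%N hr).
Qed.

Lemma holds_lit (L : signature) (M : structure L) (e : nat -> M) (b : bool) psi :
  holds e (lit b psi) <-> (holds e psi <-> b).
Proof. case: b => /=; first by split=> // H; apply H. by split=> H; [split=> //|move=> /H]. Qed.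

Lemma mkseq_sorted (R : realType) (u : nat -> R) N :
  (forall j, (j.+1 < N)%N -> u j < u j.+1) -> sorted <%R (mkseq u N).
Proof.
move=> H; apply/(sortedP 0) => i; rewrite size_mkseq => hi.
by rewrite !nth_mkseq //; [apply: H| apply: ltnW].
Qed.

Lemma mkseq_all (R : realType) (u : nat -> R) N :
  (forall j, (j < N)%N -> in01 (u j)) -> all (@in01 R) (mkseq u N).
Proof. by move=> H; apply/allP => x /mapP [i]; rewrite mem_iota => /andP[_ hi] ->; apply: H. Qed.

Section Tr.
Lemma transfer (R : realType) (L : signature) (M : structure L) n (a : R -> 'I_n -> M)
  (HI : indiscernible_segment a) (phi : formula L) W
  (Hfv : fv_in (fun v => v < n + W)%N phi) N (S : nat -> bool) (u t : nat -> R)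
  (Hu : forall j, (j.+1 < N)%N -> u j < u j.+1) (Hu01 : forall j, (j < N)%N -> in01 (u j))
  (Ht : forall j, (j.+1 < N)%N -> t j < t j.+1) (Ht01 : forall j, (j < N)%N -> in01 (t j))
  (w0 : nat -> M) (Hw0 : forall q, (q < N)%N -> (holds (tup_env (a (u q)) w0) phi <-> S q)) :
  exists w : nat -> M, forall q, (q < N)%N -> (holds (tup_env (a (t q)) w) phi <-> S q).
Proof.
pose D := (N * n)%N.
pose sg q v := if (v < n)%N then (q * n + v)%N else (D + v)%N.
pose vs := map (addn (D + n)) (iota 0 W).
pose chi := exs vs (conjN N (fun q => lit (S q) (ren (sg q) phi))).
have qnD q : (q < N)%N -> (q * n + n <= D)%N.
  by move=> hq; rewrite /D -mulSnr leq_mul2r hq orbT.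
have sg_inj q : (q < N)%N -> injective (sg q).
  move=> hq v1 v2; rewrite /sg; have := qnD _ hq; move: (q * n)%N => A h.
  by do 2 case: ifP => ? //; lia.
have memvs v : (n <= v < n + W)%N -> (D + v)%N \in vs.
  move=> /andP[h1 h2]; rewrite (_ : (D + v = (D + n) + (v - n))%N); last by lia.
  by rewrite mem_map ?mem_iota /=; [lia| exact: addnI].
have nmemvs v : (v < D)%N -> (v \in vs) = false.
  move=> h; apply/negbTE/negP => /mapP [k _] Ev; lia.
have eval s f q : size s = N -> (q < N)%N ->
    (holds (ovr (seq_env a s) vs f) (ren (sg q) phi) <->
     holds (tup_env (a (nth 0 s q)) (fun k => f (D + n + k)%N)) phi).
  move=> hs hq; rewrite holds_ren; last exact: sg_inj.
  apply: holds_agree Hfv _ => v hv; rewrite /sg /ovr.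
  case: (ltnP v n) => hvn.
    rewrite nmemvs; last by have := qnD _ hq; lia.
    by rewrite seq_env_at ?hs // tup_env_lt.
  rewrite memvs ?hvn //= tup_env_ge //; congr f; lia.
have fvchi : fv_in (fun v => v < N * n)%N chi.
  apply: fv_exs; apply: fv_conjN => q hq.
  have H : fv_in (fun w => (w \in vs) || (w < N * n)%N) (ren (sg q) phi).
    apply: fv_ren Hfv => v hv; rewrite /sg; case: ifP => hvn.
      by apply/orP; right; have := qnD _ hq; rewrite /D; lia.
    by rewrite memvs //; apply/andP; split => //; lia.
  by case: (S q).
have semchi s : size s = N -> (holds (seq_env a s) chi <->
    exists f : nat -> M, forall q, (q < N)%N ->
      (holds (tup_env (a (nth 0 s q)) (fun k => f (D + n + k)%N)) phi <-> S q)).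
  move=> hs; split.
    move=> /exs_elim [f /holds_conjN Hf]; exists f => q hq.
    by rewrite -(eval s f q hs hq); apply/holds_lit/Hf.
  case=> f Hf; apply: (exs_intro (f := f)); apply/holds_conjN => q hq.
  by apply/holds_lit; rewrite (eval s f q hs hq); apply: Hf.
have hsu : size (mkseq u N) = N by rewrite size_mkseq.
have hst : size (mkseq t N) = N by rewrite size_mkseq.
have Hu' : holds (seq_env a (mkseq u N)) chi.
  apply/semchi => //; exists (fun x => w0 (x - (D + n))%N) => q hq.
  rewrite nth_mkseq //.
  have -> : (fun k => w0 (D + n + k - (D + n))%N) = w0 by apply: boolp.funext => k; rewrite addKn.
  exact: Hw0.
have := (HI chi (mkseq u N) (mkseq t N) (etrans hsu (esym hst))).
rewrite hsu => /(_ fvchi (mkseq_sorted Hu) (mkseq_sorted Ht) (mkseq_all Hu01) (mkseq_all Ht01)).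
case=> H1 _; have := H1 Hu'; case/(semchi _ hst) => f Hf.
exists (fun k => f (D + n + k)%N) => q hq; have := Hf q hq; by rewrite nth_mkseq.
Qed.
End Tr.

Definition tt_ (R : realType) (p : nat) : R := 1 - (p.+2%:R)^-1.

Lemma tt_inc (R : realType) p : @tt_ R p < tt_ R p.+1.
Proof.
rewrite /tt_ ltrD2l ltrN2 ltf_pV2 ?posrE ?ltr0n // ltr_nat //.
Qed.

Lemma tt_01 (R : realType) p : in01 (@tt_ R p).
Proof.
rewrite /in01 /tt_ subr_ge0 gerDl oppr_le0 invr_ge0 ler0n andbT.
by rewrite invf_le1 ?ltr0n // ler1n.
Qed.

Definition pr (a i : nat) : nat := CodeSeq.code [:: a; i].

Lemma pr_inj a i a' i' : pr a i = pr a' i' -> a = a' /\ i = i'.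
Proof. by move=> /(can_inj CodeSeq.codeK) [-> ->]. Qed.

Lemma in_sumn (F : seq (nat * nat)) j : List.In j F ->
  (pr j.1 j.2 <= sumn (map (fun j => pr j.1 j.2) F))%N.
Proof.
elim: F => [|y F IH] //= [->|/IH]; first exact: leq_addr.
by move=> h; apply: leq_trans h (leq_addl _ _).
Qed.

Lemma sd_contra (R : realType) (L : signature) (M : structure L) n (a : R -> 'I_n -> M)
  (phi : formula L) W (Hfv : fv_in (fun v => v < n + W)%N phi)
  (Hall : forall N (S : nat -> bool) (t : nat -> R),
     (forall j, (j.+1 < N)%N -> t j < t j.+1) -> (forall j, (j < N)%N -> in01 (t j)) ->
     exists w : nat -> M, forall q, (q < N)%N -> (holds (tup_env (a (t q)) w) phi <-> S q)) :
  ~ strongly_dependent M.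
Proof.
pose tau v := if (v < n)%N then (W + v)%N else if (v < n + W)%N then (v - n)%N else v.
have tau_inj : injective tau by move=> v1 v2; rewrite /tau; repeat case: ifP => ?; lia.
apply; exists W, (fun _ => n), (fun _ => ren tau phi),
  (fun al i => a (tt_ R (pr al i))); split.
  move=> al; apply: fv_ren Hfv => v hv; rewrite /tau; repeat case: ifP => ?; lia.
move=> eta F.
pose N := (sumn (map (fun j => pr j.1 j.2) F)).+1.
pose S j := `[< exists al, j = pr al (eta al) >].
have [w Hw] := Hall N S (@tt_ R) (fun j _ => tt_inc R j) (fun j _ => tt_01 R j).
exists (fun k : 'I_W => w k) => -[al i] /in_sumn /= hp.
have hpN : (pr al i < N)%N by rewrite /N ltnS.
have E : holds (tup_env (fun k : 'I_W => w k) (tup_env (a (tt_ R (pr al i))) (fun=> dflt M)))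
           (ren tau phi) <-> S (pr al i).
  rewrite holds_ren // -(Hw _ hpN); apply: holds_agree Hfv _ => v hv; rewrite /tau.
  case: (ltnP v n) => hvn.
    by rewrite tup_env_ge ?leq_addr // addKn !tup_env_lt.
  by rewrite hv tup_env_lt ?tup_env_ge //; lia.
rewrite /=; case: eqP => [Ei|ne]; first by apply/E; apply/asboolP; exists al; rewrite Ei.
move=> /E /asboolP [al' /pr_inj [h1 h2]]; apply: ne; by rewrite h2 h1.
Qed.
Unset Implicit Arguments. Set Strict Implicit.

Lemma leb_mono (R : realType) (A B : set R) : A `<=` B -> ((@lebesgue_measure R) A <= lebesgue_measure B)%E.
Proof. move=> AB. rewrite /lebesgue_measure /lebesgue_stieltjes_measure /measure_extension.
exact: le_outer_measure. Qed.

Lemma null_gap (R : realType) (X : set R) (x y : R) : x < y ->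
  lebesgue_measure X = 0%E -> exists j, x < j < y /\ ~ X j.
Proof.
move=> xy X0; apply: contrapT => H.
have sub : [set` `]x, y[] `<=` X.
  move=> j /=; rewrite in_itv /= => jxy; apply: contrapT => nX; apply: H; by exists j.
have := @leb_mono R _ _ sub; rewrite X0 lebesgue_measure_itv /= lte_fin xy.
by rewrite -EFinB lee_fin subr_le0 leNgt xy.
Qed.

Theorem lemma3p4 (R : realType) (L : signature) (M : structure L)
  (Hmonster : monster R M) (Hsd : strongly_dependent M)
  (n m : nat) (a : R -> 'I_n -> M) (HI : indiscernible_segment a)
  (phi : formula L) (c : nat -> M)
  (Hmu : forall b : 'I_m -> M, avg_measure a phi c b = 0%E) :
  exists k : nat, forall s : seq R,
    uniq s -> size s = k -> all (@in01 R) s ->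
    ~ exists b : 'I_m -> M,
        forall i, i \in s -> holds (tup_env (a i) (tup_env b c)) phi.
Proof.
apply: contrapT => Hneg.
have [W HW] := fv_bound phi.
have Hfv : fv_in (fun v => v < n + W)%N phi.
  by apply: fv_mono HW => v h; apply: leq_trans h (leq_addl _ _).
apply: (@sd_contra R L M n a phi W Hfv _ Hsd) => N S t Ht Ht01.
have [s [su [ss [sa [b Hb]]]]] : exists s : seq R, uniq s /\ size s = N.+1 /\ all (@in01 R) s /\
    exists b : 'I_m -> M, forall i, i \in s -> holds (tup_env (a i) (tup_env b c)) phi.
  apply: contrapT => Hn; apply: Hneg; exists N.+1 => s h1 h2 h3 h4; apply: Hn.
  by exists s.
pose s' := sort <=%R s.
pose ip l := nth 0 s' l.
have hs' : size s' = N.+1 by rewrite size_sort.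
have sorted' : sorted <%R s' by rewrite lt_sorted_uniq_le sort_uniq su sort_le_sorted.
have ip_inc l : (l < N)%N -> ip l < ip l.+1.
  by move=> hl; move/(sortedP 0): sorted' => /(_ l); apply; rewrite hs' ltnS.
have ip01 l : (l <= N)%N -> in01 (ip l).
  move=> hl; apply: (allP (_ : all (@in01 R) s')); first by rewrite all_sort.
  by apply: mem_nth; rewrite hs' ltnS.
have ipH l : (l <= N)%N -> holds (tup_env (a (ip l)) (tup_env b c)) phi.
  move=> hl; apply: Hb; rewrite -(mem_sort <=%R); by apply: mem_nth; rewrite hs' ltnS.
have [jn Hjn] : exists jn : nat -> R, forall l, (l < N)%N ->
    ip l < jn l < ip l.+1 /\ ~ holds (tup_env (a (jn l)) (tup_env b c)) phi.
  have : forall l, exists j, (l < N)%N ->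
      ip l < j < ip l.+1 /\ ~ holds (tup_env (a j) (tup_env b c)) phi.
    move=> l; case: (ltnP l N) => hl; last by exists 0.
    have [j [hj nX]] := @null_gap R _ _ _ (ip_inc l hl) (Hmu b).
    exists j => _; split => //; move=> hX; apply: nX; split => //.
    have /andP[h0 _] := ip01 l (ltnW hl); have /andP[_ h1] := ip01 l.+1 hl.
    case/andP: hj => hj1 hj2; rewrite /in01; apply/andP; split.
      exact: le_trans h0 (ltW hj1).
    exact: le_trans (ltW hj2) h1.
  by case/boolp.choice => f Hf; exists f.
pose u j := if S j then ip j else jn j.
have ule j : (j < N)%N -> ip j <= u j < ip j.+1.
  move=> hj; rewrite /u; have [/andP[h1 h2] _] := Hjn j hj.
  by case: (S j); rewrite ?lexx ?ip_inc // (ltW h1).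
apply: (transfer HI Hfv (u := u) _ _ Ht Ht01 (w0 := tup_env b c)).
- move=> j hj; have /andP[_ h1] := ule j (ltnW hj); have /andP[h2 _] := ule j.+1 hj.
  exact: lt_le_trans h1 h2.
- move=> j hj; have /andP[h1 h2] := ule j hj.
  have /andP[h0 _] := ip01 j (ltnW hj); have /andP[_ h3] := ip01 j.+1 hj.
  rewrite /in01; apply/andP; split; first exact: le_trans h0 h1.
  exact: le_trans (ltW h2) h3.
- move=> q hq; rewrite /u; case: (S q); split => //.
    by move=> _; apply: ipH; apply: ltnW.
  by have [_ ?] := Hjn q hq.
Qed.
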